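(* Let $\Delta\ge 4$ be an integer and for positive integers $i,j$ define \[ F(i,j)=(4\Delta-6)\Bigl(\frac{1}{i}+\frac{1}{j}\Bigr)+\Delta^2-6\Delta+3+\frac{6}{\Delta}-(i-j)^2 . \] Then for every integer $i$ with $3\le i\le \left\lfloor \frac{\Delta+3}{2}\right\rfloor$ we have the strict inequality \[ (\Delta-1)\,F(i,\Delta) > F(\Delta,\Delta). \] *)

(* Defs.v *)
From mathcomp Require Import all_boot all_order all_algebra.
Set Implicit Arguments. Unset Strict Implicit. Unset Printing Implicit Defensive.
Import Order.TTheory GRing.Theory Num.Theory.
Local Open Scope ring_scope.

Definition F (D i j : nat) : rat :=
  (4 * D%:R - 6) * ((i%:R)^-1 + (j%:R)^-1) + D%:R ^+ 2 - 6 * D%:R + 3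
  + 6 / D%:R - (i%:R - j%:R) ^+ 2.

(* Main.v *)
Require Import Defs.
From mathcomp Require Import all_boot all_order all_algebra.
From mathcomp Require Import ring lra zify.
Import Order.TTheory GRing.Theory Num.Theory.
Local Open Scope ring_scope.

Lemma key (x y u v : rat) : 3 <= x -> 2*x <= y + 3 -> 4 <= y ->
  u * x = 4*y - 6 -> v * y = 6 ->
  (y - 1) * (u + y^+2 - 6*y + 7 - (x-y)^+2) > y^+2 - 6*y + 11 - v.
Proof.
move=> h3 h2 h4 hu hv.
have h1 : 3*x*(2*y-3-x) >= 4*y-6.
  have : 2*y-3-x >= (3*y-9)/2 by lra.
  nra.
have hA : x*(3*u - (4*y-6) - 3*(x-y)^+2 + 3*(3-y)^+2) >= 0.
  have -> : x*(3*u - (4*y-6) - 3*(x-y)^+2 + 3*(3-y)^+2)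
     = 3*(u*x) - x*(4*y-6) - 3*x*(x-3)*(x+3-2*y) by ring.
  rewrite hu. nra.
have hG : 3*u - (4*y-6) - 3*(x-y)^+2 + 3*(3-y)^+2 >= 0.
  have hx : 0 < x by lra.
  by rewrite -(pmulr_rge0 _ hx).
have hv0 : 0 < v by nra.
have : 3*(y-1)*(u + y^+2 - 6*y + 7 - (x-y)^+2) >= (y-1)*((4*y-6) - 6).
  have -> : 3*(y-1)*(u + y^+2 - 6*y + 7 - (x-y)^+2) = (y-1)*(3*u + 3*y^+2 - 18*y + 21 - 3*(x-y)^+2) by ring.
  apply: ler_wpM2l; first lra.
  have e : (3-y)^+2 = y^+2 - 6*y + 9 by ring.
  rewrite e in hG. lra.
have : 3*(y^+2 - 6*y + 11 - v) < (y-1)*((4*y-6) - 6).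
  have hvy : v*y*y = 6 * y by rewrite hv.
  nra.
lra.
Qed.

Theorem lemma4p3 (D i : nat) (hD : (4 <= D)%N) (hi3 : (3 <= i)%N)
  (hi : (i <= (D + 3)./2)%N) :
  (D%:R - 1) * F D i D > F D D D.
Proof.
have h2 : (2 * i <= D + 3)%N.
  have e := odd_double_half (D + 3).
  have : (i.*2 <= ((D+3)./2).*2)%N by rewrite leq_double.
  rewrite -!mul2n in e *. lia.
have hx : (3 : rat) <= i%:R by rewrite (ler_nat rat 3 i).
have hy : (4 : rat) <= D%:R by rewrite (ler_nat rat 4 D).
have hxy : 2 * (i%:R : rat) <= D%:R + 3.
  have := h2; rewrite -(ler_nat rat) natrD natrM. by [].
have xn0 : (i%:R : rat) != 0 by rewrite pnatr_eq0; case: i hi3 {hi h2 hx hxy}.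
have yn0 : (D%:R : rat) != 0 by rewrite pnatr_eq0; case: D hD {hi h2 hy hxy}.
have := @key i%:R D%:R ((4 * D%:R - 6) / i%:R) (6 / D%:R) hx hxy hy.
move=> /(_ (divfK xn0 _) (divfK yn0 _)).
have -> : F D i D = (4 * D%:R - 6) / i%:R + D%:R ^+ 2 - 6 * D%:R + 7 - (i%:R - D%:R) ^+ 2.
  rewrite /F. field. by rewrite xn0 yn0.
have -> : F D D D = D%:R ^+ 2 - 6 * D%:R + 11 - 6 / D%:R.
  rewrite /F. field. by [].
by [].
Qed.
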